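(* Let $P$ be a program and let $\tau = \alpha \cdot \mathit{issue}(p,t)\cdot \beta\cdot \mathit{com}(p,t)$ be a minimal anomaly of $P$ such that $\mathit{issue}(p,t)$ happens before $\mathit{com}(p,t)$ through $\beta$. Then no event $a$ in $\beta$ writes to a shared variable that $\mathit{com}(p,t)$ writes to.
   Context: Programs: parallel compositions of processes, each a sequence of transactions (reads of shared variables into registers, writes of register expressions to shared variables, assume statements, delimited by begin and commit). Snapshot isolation (SI): a transaction reads/writes a local snapshot of the central memory taken at its begin and can commit (publishing its writes) only if no transaction committed after its begin wrote a variable it writes. Serializability: every transaction executes atomically. Traces: each transaction $t$ of process $p$ yields an issue event $\mathit{issue}(p,t)$ (begin, reads, local writes) and a commit event $\mathit{com}(p,t)$ (which performs the writes of $t$ on the central memory). Dependencies: $\mathsf{po}$ (program order), $\mathsf{rf}$ (write-read), $\mathsf{st}$ (store order between writes to the same variable), $\mathsf{cf}$ (conflict: a read does not see a write to the same variable that would affect it if visible), and issue-to-commit of the same transaction; $\mathsf{hb}^1$ is their union, $\mathsf{hb}$ its transitive closure. An anomaly of $P$ is a trace of an SI execution of $P$ that is not a trace of any serializable execution. ''$a$ happens before $b$ through $\beta$'' in a trace $\alpha\cdot a\cdot\beta\cdot b\cdot\gamma$ means there is a nonempty subsequence $c_1\cdots c_n$ of $\beta$ with $c_i\to_{\mathsf{hb}^1}c_{i+1}$ for all $i\in[0,n]$, $c_0=a$, $c_{n+1}=b$. A transaction is delayed in a trace if its issue happens before its commit through the events between them; an anomaly is minimal if it has the least number of delayed transactions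 among all anomalies of $P$. *)

(* Defs.v *)
From mathcomp Require Import all_boot.
Set Implicit Arguments. Unset Strict Implicit. Unset Printing Implicit Defensive.

Definition var := nat.
Definition reg := nat.
Definition val := nat.
Definition regfile := reg -> val.

Inductive instr :=
| IRead of reg & var
| IWrite of var & (regfile -> val)
| IAssume of (regfile -> bool).

Definition transaction := seq instr.
Definition process := seq transaction.
(* a program is a parallel composition of processes; process p = nth p *)
Definition program := seq process.

Definition event := (bool * (nat * nat))%type.
Definition issue (p t : nat) : event := (false, (p, t)).
Definition com (p t : nat) : event := (true, (p, t)).
Definition is_com (e : event) : bool := e.1.
Definition txn_of (e : event) : nat * nat := e.2.

(* a labelled event: the event, the shared variables it reads from the
   snapshot (external reads), and the shared variables it writes *)
Definition lab := (event * (seq var * seq var))%type.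
Definition lab_ev (l : lab) : event := l.1.
Definition lab_reads (l : lab) : seq var := l.2.1.
Definition lab_writes (l : lab) : seq var := l.2.2.

Fixpoint run_body (snap : var -> val) (lw : var -> option val) (rf : regfile)
    (rd wr : seq var) (b : transaction)
    : option (regfile * (var -> option val) * seq var * seq var) :=
  match b with
  | [::] => Some (rf, lw, rd, wr)
  | IRead r x :: b' =>
      let v := if lw x is Some v then v else snap x in
      let rd' := if lw x is Some _ then rd else rcons rd x in
      run_body snap lw (fun r' => if r' == r then v else rf r') rd' wr b'
  | IWrite x e :: b' =>
      run_body snap (fun y => if y == x then Some (e rf) else lw y) rf rd (rcons wr x) b'
  | IAssume c :: b' => if c rf then run_body snap lw rf rd wr b' else None
  end.

Record pending := Pending {
  pd_txn : nat;
  pd_lw : var -> option val;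
  pd_wr : seq var;
  pd_conf : seq var              (* vars written by commits since its begin *)
}.

Record state := State {
  st_mem : var -> val;
  st_regs : nat -> regfile;
  st_next : nat -> nat;
  st_pend : nat -> option pending
}.

Definition init_state : state :=
  State (fun _ => 0) (fun _ _ => 0) (fun _ => 0) (fun _ => None).

Definition upd {T : Type} (f : nat -> T) (k : nat) (v : T) : nat -> T :=
  fun k' => if k' == k then v else f k'.

Inductive si_step (P : program) : state -> lab -> state -> Prop :=
| StepIssue (s : state) (p t : nat) rf' lw rd wr :
    p < size P -> st_pend s p = None -> st_next s p = t ->
    t < size (nth [::] P p) ->
    run_body (st_mem s) (fun _ => None) (st_regs s p) [::] [::]
             (nth [::] (nth [::] P p) t) = Some (rf', lw, rd, wr) ->
    si_step P s (issue p t, (rd, wr))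
      (State (st_mem s) (upd (st_regs s) p rf') (upd (st_next s) p t.+1)
             (upd (st_pend s) p (Some (Pending t lw wr [::]))))
| StepCommit (s : state) (p : nat) (pd : pending) :
    st_pend s p = Some pd ->
    ~~ has (fun x => x \in pd_conf pd) (pd_wr pd) ->
    si_step P s (com p (pd_txn pd), ([::], pd_wr pd))
      (State (fun x => if pd_lw pd x is Some v then v else st_mem s x)
             (st_regs s) (st_next s)
             (fun q => if q == p then None else
                 if st_pend s q is Some pq then
                   Some (Pending (pd_txn pq) (pd_lw pq) (pd_wr pq) (pd_conf pq ++ pd_wr pd))
                 else None)).

Inductive si_reach (P : program) : state -> seq lab -> Prop :=
| Reach0 : si_reach P init_state [::]
| ReachS s tr l s' : si_reach P s tr -> si_step P s l s' -> si_reach P s' (rcons tr l).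

Definition ldflt : lab := (issue 0 0, ([::], [::])).
Definition evs (tr : seq lab) : seq event := map lab_ev tr.
Definition ev_at (tr : seq lab) (i : nat) : event := lab_ev (nth ldflt tr i).
Definition pos (tr : seq lab) (e : event) : nat := index e (evs tr).
Definition lab_of (tr : seq lab) (e : event) : lab := nth ldflt tr (pos tr e).

Definition complete (tr : seq lab) : Prop :=
  forall p t, issue p t \in evs tr -> com p t \in evs tr.

Definition si_exec (P : program) (tr : seq lab) : Prop :=
  (exists s, si_reach P s tr) /\ complete tr.

(* serializable executions: every transaction executes atomically, i.e. each
   issue event is immediately followed by its commit *)
Definition ser_exec (P : program) (tr : seq lab) : Prop :=
  (exists s, si_reach P s tr) /\
  forall i, i < size tr -> ~~ is_com (ev_at tr i) ->
    i.+1 < size tr /\ ev_at tr i.+1 = (true, txn_of (ev_at tr i)).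

Definition last_writer (tr : seq lab) (i : nat) (x : var) : option event :=
  foldl (fun acc (l : lab) => if is_com (lab_ev l) && (x \in lab_writes l)
                              then Some (lab_ev l) else acc) None (take i tr).

Definition po (tr : seq lab) (a b : event) : bool :=
  [&& a \in evs tr, b \in evs tr, (txn_of a).1 == (txn_of b).1 &
      (txn_of a).2 < (txn_of b).2].

Definition rf (tr : seq lab) (a b : event) : bool :=
  [&& a \in evs tr, b \in evs tr, is_com a, ~~ is_com b &
      has (fun x => last_writer tr (pos tr b) x == Some a) (lab_reads (lab_of tr b))].

Definition st (tr : seq lab) (a b : event) : bool :=
  [&& a \in evs tr, b \in evs tr, is_com a, is_com b, pos tr a < pos tr b &
      has (fun x => x \in lab_writes (lab_of tr b)) (lab_writes (lab_of tr a))].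

Definition cf (tr : seq lab) (a b : event) : bool :=
  [&& a \in evs tr, b \in evs tr, ~~ is_com a, is_com b, pos tr a < pos tr b,
      txn_of a != txn_of b &
      has (fun x => x \in lab_writes (lab_of tr b)) (lab_reads (lab_of tr a))].

Definition itc (tr : seq lab) (a b : event) : bool :=
  [&& a \in evs tr, b \in evs tr, ~~ is_com a, is_com b & txn_of a == txn_of b].

Definition hb1 (tr : seq lab) (a b : event) : bool :=
  [|| po tr a b, rf tr a b, st tr a b, cf tr a b | itc tr a b].

Definition same_trace (tr1 tr2 : seq lab) : Prop :=
  (forall e, (e \in evs tr1) = (e \in evs tr2)) /\
  (forall a b, [/\ po tr1 a b = po tr2 a b, rf tr1 a b = rf tr2 a b,
                   st tr1 a b = st tr2 a b & cf tr1 a b = cf tr2 a b]).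

Definition anomaly (P : program) (tr : seq lab) : Prop :=
  si_exec P tr /\ ~ (exists tr', ser_exec P tr' /\ same_trace tr tr').

(* the event at position i happens before the event at position j through the
   events strictly between them: a nonempty subsequence c_1..c_n of those events
   with an hb1-chain from position i through c_1..c_n to position j *)
Definition hb_through (tr : seq lab) (i j : nat) : bool :=
  [exists m : (j - i.+1).-tuple bool,
     let cs := mask m (iota i.+1 (j - i.+1)) in
     (cs != [::]) && path (fun k l => hb1 tr (ev_at tr k) (ev_at tr l)) i (rcons cs j)].

Definition delayed_at (tr : seq lab) (k : nat) : bool :=
  let e := ev_at tr k in
  let c := (true, txn_of e) in
  [&& ~~ is_com e, c \in evs tr, k < pos tr c & hb_through tr k (pos tr c)].

Definition ndelayed (tr : seq lab) : nat := count (delayed_at tr) (iota 0 (size tr)).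

Definition minimal_anomaly (P : program) (tr : seq lab) : Prop :=
  anomaly P tr /\ forall tr', anomaly P tr' -> ndelayed tr <= ndelayed tr'.

(* Main.v *)
Require Import Defs.
From mathcomp Require Import all_boot.
Set Implicit Arguments. Unset Strict Implicit. Unset Printing Implicit Defensive.

Inductive run (P : program) : state -> seq lab -> state -> Prop :=
| Run0 s : run P s [::] s
| RunS s l s' ls s'' : si_step P s l s' -> run P s' ls s'' -> run P s (l :: ls) s''.

Lemma run_rcons P s ls s' l s'' :
  run P s ls s' -> si_step P s' l s'' -> run P s (rcons ls l) s''.
Proof.
elim=> [s0|s0 l0 s1 ls0 s2 H _ IH] Hs /=.
- by apply: RunS Hs (Run0 _ _).
- by apply: RunS H (IH Hs).
Qed.

Lemma run_cons P s l ls s' :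
  run P s (l :: ls) s' -> exists s1, si_step P s l s1 /\ run P s1 ls s'.
Proof. by move=> H; inversion H; subst; eexists; split; eauto. Qed.

Lemma run_nil P s s' : run P s [::] s' -> s' = s.
Proof. by move=> H; inversion H. Qed.

Lemma run_cat P l1 : forall s l2 s', run P s (l1 ++ l2) s' ->
  exists sm, run P s l1 sm /\ run P sm l2 s'.
Proof.
elim: l1 => [|l l1 IH] s l2 s' /= H.
- by exists s; split => //; apply: Run0.
- have [s1 [Hs Hr]] := run_cons H.
  have [sm [H1 H2]] := IH _ _ _ Hr.
  by exists sm; split => //; apply: RunS Hs H1.
Qed.

Lemma reach_run P s tr : si_reach P s tr -> forall tr1 tr2, tr = tr1 ++ tr2 ->
  exists s1, si_reach P s1 tr1 /\ run P s1 tr2 s.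
Proof.
elim=> [|s0 tr0 l s' HR IH Hs] tr1 tr2.
- case: tr1 => [|//] /=; case: tr2 => [|//] _.
  by exists init_state; split; [apply: Reach0|apply: Run0].
- case/lastP: tr2 => [|tr2 l2].
  + rewrite cats0 => <-; exists s'; split; last by apply: Run0.
    by apply: ReachS HR Hs.
  + rewrite -rcons_cat => /eqP; rewrite eqseq_rcons => /andP[/eqP E /eqP El].
    subst l2.
    have [s1 [H1 H2]] := IH _ _ E.
    by exists s1; split => //; apply: run_rcons H2 Hs.
Qed.

Lemma reach_app P s1 tr1 ls s2 :
  si_reach P s1 tr1 -> run P s1 ls s2 -> si_reach P s2 (tr1 ++ ls).
Proof.
move=> HR Hr; elim: Hr tr1 HR => [s0|s l s' ls0 s'' Hs _ IH] tr1 HR.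
- by rewrite cats0.
- rewrite -cat_rcons; apply: IH; by apply: ReachS HR Hs.
Qed.

Definition Inv (s : state) (tr : seq lab) :=
  (forall q t', com q t' \in evs tr -> t' < st_next s q) /\
  (forall q pd, st_pend s q = Some pd ->
     pd_txn pd < st_next s q /\ com q (pd_txn pd) \notin evs tr).

Lemma inv_reach P s tr : si_reach P s tr -> Inv s tr.
Proof.
elim=> [|s0 tr0 l s' HR [IX IY] Hs].
- by split.
- rewrite /Inv /evs map_rcons.
  case: Hs IX IY => [s1 p t rf' lw rd wr Hp Hpend Hnext Ht Hrun
                    | s1 p pd Hpend Hnc] IX IY /=.
  + split.
    * move=> q t'; rewrite mem_rcons in_cons => /orP[/eqP//|/IX].
      rewrite /upd; case: eqP => [->|//]; rewrite Hnext => ?; exact: ltnW.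
    * move=> q pd; rewrite /upd; case: eqP => [->|_].
      - move=> [<-] /=; split => //; rewrite mem_rcons in_cons /=.
        apply/negP => /IX; by rewrite Hnext ltnn.
      - move=> /IY [H1 H2]; split => //; rewrite mem_rcons in_cons /=.
        by rewrite H2.
  + split.
    * move=> q t'; rewrite mem_rcons in_cons => /orP[/eqP [-> ->]|/IX //].
      by case: (IY _ _ Hpend).
    * move=> q pd'; case: eqP => // Hq.
      case E: (st_pend s1 q) => [pq|//] [<-] /=.
      have [H1 H2] := IY _ _ E; split => //.
      rewrite mem_rcons in_cons negb_or H2 andbT.
      by apply/eqP => -[Eq _]; exact: Hq Eq.
Qed.

Definition comq (q : nat) (l : lab) : bool :=
  is_com (lab_ev l) && ((txn_of (lab_ev l)).1 == q).

Lemma track P q s ls s' pd : run P s ls s' -> st_pend s q = Some pd ->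
  ~~ has (comq q) ls ->
  exists pd', [/\ st_pend s' q = Some pd', pd_txn pd' = pd_txn pd,
    pd_wr pd' = pd_wr pd, (forall x, x \in pd_conf pd -> x \in pd_conf pd') &
    (forall l, l \in ls -> is_com (lab_ev l) -> forall x, x \in lab_writes l -> x \in pd_conf pd')].
Proof.
move=> Hr; elim: Hr pd => [s0|s0 l s1 ls0 s2 Hs _ IH] pd Hp Hh.
- by exists pd; split.
- move: Hh => /=; rewrite negb_or => /andP[Hl Hh].
  have [pd1 [E1 T1 W1 C1 L1]] : exists pd1, [/\ st_pend s1 q = Some pd1,
     pd_txn pd1 = pd_txn pd, pd_wr pd1 = pd_wr pd,
     (forall x, x \in pd_conf pd -> x \in pd_conf pd1) &
     (is_com (lab_ev l) -> forall x, x \in lab_writes l -> x \in pd_conf pd1)].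
  { case: Hs Hp Hl => [s3 p t rf' lw rd wr Hp' Hpend Hnext Ht Hrun
                    | s3 p pd0 Hpend Hnc] Hp Hl /=.
    - exists pd; split => //; rewrite /upd; case: eqP => // E.
      by rewrite -E Hp in Hpend.
    - move: Hl; rewrite /comq /= => Hpq.
      rewrite eq_sym (negbTE Hpq) Hp.
      eexists; split; [reflexivity| | | |] => //= x Hx.
      + by rewrite mem_cat Hx.
      + by move=> Hx'; rewrite mem_cat Hx' orbT. }
  have [pd' [E' T' W' C' L']] := IH _ E1 Hh.
  exists pd'; split => //.
  + by rewrite T'.
  + by rewrite W'.
  + by move=> x /C1 /C'.
  + move=> l0; rewrite in_cons => /orP[/eqP ->|]; last exact: L'.
    by move=> Hc x /(L1 Hc) /C'.
Qed.

Lemma step_issue P s l s' p t : si_step P s l s' -> lab_ev l = issue p t ->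
  st_pend s p = None /\ exists lw, st_pend s' p = Some (Pending t lw (lab_writes l) [::]).
Proof.
case=> [s0 p0 t0 rf' lw rd wr Hp Hpend Hnext Ht Hrun | s0 p0 pd0 Hpend Hnc] //=.
move=> [E1 E2]; subst; split => //; exists lw; by rewrite /upd eqxx.
Qed.

Lemma step_com P s l s' : si_step P s l s' -> is_com (lab_ev l) ->
  exists p0 pd0, [/\ st_pend s p0 = Some pd0, lab_ev l = com p0 (pd_txn pd0),
    lab_writes l = pd_wr pd0 & ~~ has (fun x => x \in pd_conf pd0) (pd_wr pd0)].
Proof.
case=> [s0 p0 t0 rf' lw rd wr Hp Hpend Hnext Ht Hrun | s0 p0 pd0 Hpend Hnc] //=.
by exists p0, pd0.
Qed.

Lemma first_occ (T : Type) (f : pred T) (s : seq T) : has f s ->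
  exists s1 y s2, [/\ s = s1 ++ y :: s2, f y & ~~ has f s1].
Proof.
elim: s => [|y s IH] //= /orP[Hy|Hs].
- by exists [::], y, s.
- case Ey: (f y); first by exists [::], y, s.
  have [s1 [z [s2 [-> Hz Hn]]]] := IH Hs.
  by exists (y :: s1), z, s2; rewrite /= Ey.
Qed.

Lemma in_split (T : eqType) (x : T) (s : seq T) : x \in s ->
  exists s1 s2, s = s1 ++ x :: s2.
Proof. by case/splitPr => s1 s2; exists s1, s2. Qed.

Theorem lemma3 (P : program) (alpha beta : seq lab) (li lc : lab) (p t : nat) :
  minimal_anomaly P (alpha ++ li :: beta ++ [:: lc]) ->
  lab_ev li = issue p t -> lab_ev lc = com p t ->
  hb_through (alpha ++ li :: beta ++ [:: lc]) (size alpha) (size alpha + size beta).+1 ->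
  forall a : lab, a \in beta ->
  forall x : var, x \in lab_writes a -> x \notin lab_writes lc.
Proof.
move=> [[[[sF HR] Hcomp] _] _] Hli Hlc _ a Ha x Hxa; apply/negP => Hxc.
have [s0 [R0 Rn]] := reach_run HR (tr1 := alpha) (tr2 := li :: beta ++ [:: lc]) erefl.
have [s1 [Si Rb]] := run_cons Rn.
have [s2 [Rbeta Rlc]] := run_cat Rb.
have [sF' [Slc RF]] := run_cons Rlc.
have EF := run_nil RF; subst sF'.
have [_ [lw1 Hp1]] := step_issue Si Hli.
have Hcl : is_com (lab_ev lc) by rewrite Hlc.
have [p2 [pd2 [Hp2 Ec2 Wc2 Nc2]]] := step_com Slc Hcl.
move: Ec2; rewrite Hlc => -[E1 E2]; subst p2.
have HR2 : si_reach P s2 (alpha ++ li :: beta).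
  by apply: reach_app R0 (RunS Si Rbeta).
have [_ IY2] := inv_reach HR2.
have [_ IYF] := inv_reach HR.
case Hb: (has (comq p) beta).
- have [b1 [c [b2 [Eb Hc Hn]]]] := first_occ Hb.
  move: Rbeta; rewrite Eb => /run_cat [sc [Rb1 Rc]].
  have [sc' [Sc _]] := run_cons Rc.
  have [pdc [Ec Tc _ _ _]] := track Rb1 Hp1 Hn.
  have Hcc : is_com (lab_ev c) by case/andP: Hc.
  have [p0 [pd0 [Hp0 Ev0 _ _]]] := step_com Sc Hcc.
  move: Hc; rewrite /comq Ev0 /= => /eqP Ep; subst p0.
  move: Hp0; rewrite Ec => -[Epd]; subst pd0.
  have Et : pd_txn pd2 = pd_txn pdc by rewrite Tc -E2.
  have := (IY2 _ _ Hp2).2; rewrite Et.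
  apply/negP/negPn; rewrite /evs map_cat mem_cat /= in_cons Eb map_cat mem_cat /= in_cons.
  by rewrite -Ev0 eqxx !orbT.
- have Hnb : ~~ has (comq p) beta by rewrite Hb.
  have [pdb [Eb Tb Wb _ Lb]] := track Rbeta Hp1 Hnb.
  move: Hp2; rewrite Eb => -[Epd]; subst pd2.
  have WL : lab_writes lc = lab_writes li by rewrite Wc2 Wb.
  have C : forall c, c \in beta -> is_com (lab_ev c) -> forall y, y \in lab_writes c ->
      y \in lab_writes lc -> False.
    move=> c Hc Hcc y Hy Hyl.
    move/hasP: Nc2; apply; exists y; first by rewrite -Wc2.
    exact: Lb Hc Hcc y Hy.
  case Hac: (is_com (lab_ev a)); first exact: C Ha Hac x Hxa Hxc.
  case Ea: (lab_ev a) Hac => [[] [q t']] // _.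
  have [b1 [b2 Ebeta]] := in_split Ha.
  move: (Rbeta); rewrite Ebeta => /run_cat [sa [Rb1 Ra]].
  have [sa' [Sa Rb2]] := run_cons Ra.
  have [Hqa [lwa Hqa']] := step_issue Sa Ea.
  have Hnb1 : ~~ has (comq p) b1 by move: Hnb; rewrite Ebeta has_cat negb_or => /andP[].
  have [pda [Epa _ _ _ _]] := track Rb1 Hp1 Hnb1.
  have Hqp : q != p by apply/eqP => E; subst q; rewrite Epa in Hqa.
  case Hb2: (has (comq q) b2).
  + have [c1 [c [c2 [Ec Hc Hn]]]] := first_occ Hb2.
    move: Rb2; rewrite Ec => /run_cat [sc [Rc1 Rc]].
    have [sc' [Sc _]] := run_cons Rc.
    have [pdq [Eq Tq Wq _ _]] := track Rc1 Hqa' Hn.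
    have Hcc : is_com (lab_ev c) by case/andP: Hc.
    have [p0 [pd0 [Hp0 Ev0 Wc0 _]]] := step_com Sc Hcc.
    move: Hc; rewrite /comq Ev0 /= => /eqP Ep; subst p0.
    move: Hp0; rewrite Eq => -[Epd]; subst pd0.
    refine (C c _ Hcc x _ Hxc).
    * by rewrite Ebeta Ec mem_cat in_cons mem_cat in_cons eqxx !orbT.
    * by rewrite Wc0 Wq.
  + have [pdq [Eq Tq _ _ _]] := track Rb2 Hqa' (negbT Hb2).
    have Hlcq : ~~ has (comq q) [:: lc].
      by rewrite /= /comq Hlc /= eq_sym (negbTE Hqp).
    have [pdF [EF TF _ _ _]] := track (RunS Slc (Run0 P sF)) Eq Hlcq.
    have := (IYF _ _ EF).2; rewrite TF Tq /=.
    apply/negP/negPn; apply: Hcomp.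
    rewrite /evs map_cat mem_cat /= in_cons map_cat mem_cat.
    apply/orP; right; apply/orP; right; apply/orP; left.
    have -> : issue q t' = lab_ev a by rewrite Ea.
    exact: map_f.
Qed.
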